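(* Let $\Omega=\bigcup_{k=1}^K\Omega_k$ be a partition of a domain $\Omega$, and let $X$, $Y$, $Z$, $V$, the linear operators $A:X\to Y$, $B:X\to Z$, the data $f\in Y$, $g\in Z$, and the orthonormal bases $\{\Phi_{k,i}\}_{i\ge1}$ of $Y|_{\Omega_k}$ be as in the context. Assume the problem $Au=f$ in $\Omega$, $Bu=g$ on $\partial\Omega$ has a unique solution $u^*\in V$ with an approximating sequence $\{u_n^*\}\subset X$, and assume the norm relation: there are constants $C_1,C_2>0$ such that $C_1\|v\|_V\le\|Av\|_Y+\|Bv\|_Z\le C_2\|v\|_X$ for all $v\in X$. For $k=1,\dots,K$ let $G_k$ be a compact subset of $Y|_{\Omega_k}$ containing $\{(Au_n^*-f)|_{\Omega_k}\}_{n\ge1}$ and let $\tilde V_K=\{v\in X:(Av-f)|_{\Omega_k}\in G_k,\ k=1,\dots,K\}$. Let $\epsilon>0$ and let $\mathbf N_{\epsilon,K}=(N_{\epsilon,1},\dots,N_{\epsilon,K})$ be integers such that $\mathcal J_\tau^{h,\mathbf N_{\epsilon,K}}(v)\ge\mathcal J_\tau(v)-\epsilon$ for all $v\in\tilde V_K$ (such integers exist). Fix $\tau\ge1$. Let $\{\mathfrak N_{\theta,n}\}_{n\ge1}$ be a sequence of function classes (neural network classes), let $\delta_n\to0$, and let $u_n\in\mathfrak N_{\theta,n}\cap\tilde V_K$ be a quasi-minimizer, i.e. $$\mathcal J_\tau^{h,\mathbf N_{\epsilon,K}}(u_n)\le\inf_{w\in\mathfrak N_{\theta,n}\cap\tilde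 V_K}\mathcal J_\tau^{h,\mathbf N_{\epsilon,K}}(w)+\delta_n .$$ Then $$\|u_n-u^*\|_V\le\sqrt2\,C_1^{-1}\Big(\mathcal J_\tau^{h,\mathbf N_{\epsilon,K}}(u_n)+\delta_n+\epsilon\Big)^{1/2}.$$
   Context: Setting: $X$ is a space of functions on $\Omega$ contained in a normed space $V$; $Y$ is a Hilbert space of functions on $\Omega$ and $Y|_{\Omega_k}$ denotes the Hilbert space with the same structure over $\Omega_k$, with $\|w\|_Y^2=\sum_{k=1}^K\|w|_{\Omega_k}\|_{Y|_{\Omega_k}}^2$ (e.g. $Y=L^2$); $Z$ is a normed space of functions on $\partial\Omega$. For each $k$, $\{\Phi_{k,i}\}_{i\ge1}$ is a complete orthonormal basis of $Y|_{\Omega_k}$, and $(w,\Phi_{k,i})_Y$ is the $Y|_{\Omega_k}$ inner product of $w|_{\Omega_k}$ with $\Phi_{k,i}$. Loss functionals: $\mathcal J_\tau(v)=\|f-Av\|_Y^2+\tau\|Bv-g\|_Z^2$ and, for $\mathbf N=(N_1,\dots,N_K)$, $\mathcal J_\tau^{h,\mathbf N}(v)=\sum_{k=1}^K\sum_{i=1}^{N_k}(f-Av,\Phi_{k,i})_Y^2+\tau\|Bv-g\|_Z^2$. Solution concept: $u^*\in V$ is a solution if there is a sequence $\{u_n^*\}\subset X$ (an approximating sequence) with $\|u_n^*-u^*\|_V\to0$ and $\|Au_n^*-f\|_Y+\|Bu_n^*-g\|_Z\to0$. *)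

(* Defs.v *)
From HB Require Import structures.
From mathcomp Require Import all_boot all_order all_algebra.
From mathcomp Require Import all_classical all_reals all_analysis.
Set Implicit Arguments. Unset Strict Implicit. Unset Printing Implicit Defensive.
Import Order.TTheory GRing.Theory Num.Theory.
Import numFieldNormedType.Exports.
Local Open Scope classical_set_scope.
Local Open Scope ring_scope.

Definition inner_product_of {R : realType} (E : normedModType R)
  (ip : E -> E -> R) : Prop :=
  [/\ (forall x y, ip x y = ip y x),
      (forall (a : R) x y z, ip (a *: x + y) z = a * ip x z + ip y z)
    & (forall x, ip x x = `|x| ^+ 2)].

Definition hilbert_space {R : realType} (E : completeNormedModType R)
  (ip : E -> E -> R) : Prop := inner_product_of ip.

Definition complete_orthonormal_basis {R : realType} (E : normedModType R)
  (ip : E -> E -> R) (Phi : nat -> E) : Prop :=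
  (forall i j, ip (Phi i) (Phi j) = (i == j)%:R) /\
  (forall w : E, (fun n => \sum_(i < n) ip w (Phi i) *: Phi i) @ \oo --> w).

Definition J_tau {R : realType} (X Y Z : normedModType R)
  (A : X -> Y) (B : X -> Z) (f : Y) (g : Z) (tau : R) (v : X) : R :=
  `|f - A v| ^+ 2 + tau * `|B v - g| ^+ 2.

(* J_tau^{h,N}(v) = sum_k sum_{i <= N_k} (f - Av, Phi_{k,i})^2 + tau ||Bv - g||^2;
   the basis index i >= 1 of the paper is shifted to i >= 0 *)
Definition J_tau_hN {R : realType} (K : nat) (X Y Z : normedModType R)
  (Yk : 'I_K -> normedModType R) (ipk : forall k, Yk k -> Yk k -> R)
  (res : forall k, Y -> Yk k) (Phi : forall k, nat -> Yk k) (N : 'I_K -> nat)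
  (A : X -> Y) (B : X -> Z) (f : Y) (g : Z) (tau : R) (v : X) : R :=
  \sum_(k < K) \sum_(i < N k) (ipk k (res k (f - A v)) (Phi k i)) ^+ 2
  + tau * `|B v - g| ^+ 2.

(* us is an approximating sequence for w (j : X -> V is the inclusion) *)
Definition approximating_seq {R : realType} (X V Y Z : normedModType R)
  (j : X -> V) (A : X -> Y) (B : X -> Z) (f : Y) (g : Z)
  (w : V) (us : nat -> X) : Prop :=
  (fun n => `|j (us n) - w|) @ \oo --> (0 : R) /\
  (fun n => `|A (us n) - f| + `|B (us n) - g|) @ \oo --> (0 : R).

Definition is_solution {R : realType} (X V Y Z : normedModType R)
  (j : X -> V) (A : X -> Y) (B : X -> Z) (f : Y) (g : Z) (w : V) : Prop :=
  exists us : nat -> X, approximating_seq j A B f g w us.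

Definition tildeV {R : realType} (K : nat) (X Y : normedModType R)
  (Yk : 'I_K -> normedModType R) (res : forall k, Y -> Yk k)
  (G : forall k, set (Yk k)) (A : X -> Y) (f : Y) : set X :=
  [set v | forall k : 'I_K, G k (res k (A v - f))].

(* Main.v *)
Require Import Defs.
From HB Require Import structures.
From mathcomp Require Import all_boot all_order all_algebra.
From mathcomp Require Import all_classical all_reals all_analysis.
From mathcomp Require Import lra.
Import Order.TTheory GRing.Theory Num.Theory.
Import numFieldNormedType.Exports.
Local Open Scope classical_set_scope.
Local Open Scope ring_scope.

Lemma le_of_cvg (R: realType) (x y : R) (e : nat -> R) :
  e @ \oo --> 0 -> (forall m, x <= y + e m) -> x <= y.
Proof.
move=> he hx.
have h : (fun m => y + e m) @ \oo --> y.
  by rewrite -[X in _ --> X]addr0; apply: cvgD => //; exact: cvg_cst.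
rewrite -(cvg_lim _ h) //.
apply: limr_ge; first by apply/cvg_ex; exists y.
by near=> m; apply: hx.
Unshelve. all: by end_near.
Qed.

Theorem mainTheorem2 (R : realType) (K : nat)
  (X V Z : normedModType R) (Y : completeNormedModType R) (ipY : Y -> Y -> R)
  (Yk : 'I_K -> completeNormedModType R) (ipk : forall k, Yk k -> Yk k -> R)
  (res : forall k, {linear Y -> Yk k})
  (Phi : forall k, nat -> Yk k)
  (j : {linear X -> V}) (A : {linear X -> Y}) (B : {linear X -> Z})
  (f : Y) (g : Z) (ustar : V) (ustars : nat -> X) (C1 C2 : R)
  (G : forall k, set (Yk k)) (eps tau : R) (N : 'I_K -> nat)
  (NN : nat -> set X) (delta : nat -> R) (u : nat -> X) :
  injective j ->
  hilbert_space ipY ->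
  (forall k, hilbert_space (ipk k)) ->
  (forall w : Y, `|w| ^+ 2 = \sum_(k < K) `|res k w| ^+ 2) ->
  (forall k, complete_orthonormal_basis (ipk k) (Phi k)) ->
  approximating_seq j A B f g ustar ustars ->
  (forall w, is_solution j A B f g w -> w = ustar) ->
  0 < C1 -> 0 < C2 ->
  (forall v : X, C1 * `|j v| <= `|A v| + `|B v| /\ `|A v| + `|B v| <= C2 * `|v|) ->
  (forall k, compact (G k)) ->
  (forall k n, G k (res k (A (ustars n) - f))) ->
  0 < eps ->
  (forall v, tildeV res G A f v ->
     J_tau_hN ipk res Phi N A B f g tau v >= J_tau A B f g tau v - eps) ->
  1 <= tau ->
  delta @ \oo --> (0 : R) ->
  (forall n, (NN n `&` tildeV res G A f) (u n)) ->
  (forall n, J_tau_hN ipk res Phi N A B f g tau (u n) <=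
     inf [set J_tau_hN ipk res Phi N A B f g tau w | w in NN n `&` tildeV res G A f]
     + delta n) ->
  forall n, `|j (u n) - ustar| <=
    Num.sqrt 2 * C1^-1 *
    Num.sqrt (J_tau_hN ipk res Phi N A B f g tau (u n) + delta n + eps).
Proof.
move=> jinj hY hYk hres hPhi [h1 h2] huniq C1pos C2pos hnorm hG hGu epspos hJ tau1 hdelta huin hqm n.
set a := `|A (u n) - f|; set b := `|B (u n) - g|.
have ge0a : 0 <= a by apply: normr_ge0.
have ge0b : 0 <= b by apply: normr_ge0.
have step1 : C1 * `|j (u n) - ustar| <= a + b.
  apply: (@le_of_cvg _ _ _ (fun m => (`|A (ustars m) - f| + `|B (ustars m) - g|)
      + C1 * `|j (ustars m) - ustar|)).
    rewrite -[X in _ --> X]addr0; apply: cvgD => //.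
    rewrite -(mulr0 C1); apply: cvgM => //; exact: cvg_cst.
  move=> m.
  have e1 : `|j (u n) - ustar| <= `|j (u n - ustars m)| + `|j (ustars m) - ustar|.
    by rewrite linearB /=; apply: ler_distD.
  have e2 := (hnorm (u n - ustars m)).1.
  have e3 : `|A (u n - ustars m)| <= a + `|A (ustars m) - f|.
    rewrite linearB /= (_ : A (u n) - A (ustars m) = (A (u n) - f) - (A (ustars m) - f)).
      exact: ler_normB.
    by rewrite opprB addrA subrK.
  have e4 : `|B (u n - ustars m)| <= b + `|B (ustars m) - g|.
    rewrite linearB /= (_ : B (u n) - B (ustars m) = (B (u n) - g) - (B (ustars m) - g)).
      exact: ler_normB.
    by rewrite opprB addrA subrK.
  have e5 := ler_wpM2l (ltW C1pos) e1.
  rewrite mulrDr in e5.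
  have hn1 : 0 <= `|A (ustars m) - f| by apply: normr_ge0.
  have hn2 : 0 <= `|B (ustars m) - g| by apply: normr_ge0.
  lra.
set W := J_tau_hN ipk res Phi N A B f g tau (u n).
have W0 : forall v, 0 <= J_tau_hN ipk res Phi N A B f g tau v.
  move=> v; rewrite /J_tau_hN; apply: addr_ge0.
    by apply: sumr_ge0 => k _; apply: sumr_ge0 => i _; apply: sqr_ge0.
  by apply: mulr_ge0; [lra | apply: sqr_ge0].
have d0 : 0 <= delta n.
  set S := [set J_tau_hN ipk res Phi N A B f g tau w | w in NN n `&` tildeV res G A f].
  have SW : S W by exists (u n).
  have lb : has_lbound S by exists 0 => x [w _ <-].
  have := ge_inf lb SW.
  have := hqm n; rewrite -/W -/S. lra.
have hJn := hJ (u n) (huin n).2.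
rewrite /J_tau -/W distrC -/a -/b in hJn.
have step2 : (a + b) ^+ 2 <= 2 * (W + delta n + eps).
  have hb2 : b ^+ 2 <= tau * b ^+ 2.
    by rewrite -{1}(mul1r (b ^+ 2)); apply: ler_wpM2r => //; apply: sqr_ge0.
  have : (a + b) ^+ 2 <= 2 * (a ^+ 2 + b ^+ 2).
    have := sqr_ge0 (a - b). rewrite sqrrB sqrrD. lra.
  lra.
have Wpos : 0 <= W + delta n + eps by have := W0 (u n); rewrite -/W; lra.
rewrite -mulrA [C1^-1 * _]mulrC mulrA -sqrtrM; last by [].
have ab : a + b <= Num.sqrt (2 * (W + delta n + eps)).
  rewrite -[a + b]ger0_norm; last by apply: addr_ge0.
  rewrite -sqrtr_sqr ler_sqrt //. by apply: mulr_ge0.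
rewrite ler_pdivlMr; last by [].
rewrite mulrC; lra.
Qed.
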